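(* Fix $\chi \in C_c^\infty((0,1))$. There is a function $g_\chi:(0,\infty) \to [0,\infty)$ depending only on $\chi$ such that: for every $N \in \mathbb N$, every $a \in \mathbb Z_N \simeq \{0,\dots,N-1\}$ and every $r \in (0,1/2)$ with $d(a/N, 0) \ge r$, $$\Big| \sum_{m=0}^{N-1} \exp\Big(\frac{2\pi i a m}{N}\Big) \chi\Big(\frac mN\Big)\Big| \le N \cdot g_\chi(Nr);$$ moreover, for every $n \ge 0$ there is $C_n>0$ (depending only on $\chi$) with $g_\chi(x) \le C_n x^{-n}$ for all $x>0$, and if $\chi \in \mathcal G^s_c((0,1))$ for some $s>1$ then there are $C, c > 0$ (depending only on $\chi$) with $g_\chi(x) \le C e^{-c x^{1/s}}$ for all $x > 0$.
   Context: On $[0,1]$ with $0$ and $1$ identified, $d(x,y) = \min\{|x-y|, 1 - |x-y|\}$. For $s>1$, $\mathcal G^s_c((0,1))$ is the set of $f \in C_c^\infty(\mathbb R)$ with $\operatorname{supp} f \subset (0,1)$ such that for every compact $K' \subset \mathbb R$ there is $C_{K',f}$ with $\sup_{x \in K'}|\partial^\alpha f(x)| \le C_{K',f}^{\alpha+1}(\alpha!)^s$ for all integers $\alpha \ge 0$. *)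

(* Defs.v *)
From Stdlib Require Import Reals Factorial.
From Coquelicot Require Import Coquelicot.
Open Scope R_scope.

Definition smooth (f : R -> R) : Prop :=
  forall (k : nat) (x : R), ex_derive_n f k x.

Definition compact_support_in_01 (f : R -> R) : Prop :=
  exists eps : R, 0 < eps /\ forall x : R, (x <= eps \/ 1 - eps <= x) -> f x = 0.

Definition Cc_inf_01 (f : R -> R) : Prop := smooth f /\ compact_support_in_01 f.

(* Gevrey class G^s_c((0,1)): compact subsets K' of R are handled through
   the closed bounded intervals [lo, hi] (every compact set lies in one). *)
Definition gevrey_c_01 (s : R) (f : R -> R) : Prop :=
  Cc_inf_01 f /\
  forall lo hi : R, exists C : R, 0 < C /\
    forall (alpha : nat) (x : R), lo <= x <= hi ->
      Rabs (Derive_n f alpha x) <= C ^ (alpha + 1) * Rpower (INR (Factorial.fact alpha)) s.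

(* Distance on the circle R/Z (for x in [0,1]) *)
Definition dist_circ (x y : R) : R := Rmin (Rabs (x - y)) (1 - Rabs (x - y)).

Definition expi (t : R) : C := (cos t, sin t).

Definition exp_sum (chi : R -> R) (N a : nat) : C :=
  sum_n (fun m : nat =>
     Cmult (expi (2 * PI * INR a * INR m / INR N)) (RtoC (chi (INR m / INR N))))
    (N - 1)%nat.

(* Main.v *)
Require Import Defs.
From Stdlib Require Import Reals Lra Lia ZArith.
From Coquelicot Require Import Coquelicot.
Open Scope R_scope.

Lemma loc_all (P : R -> Prop) x : (forall y, P y) -> locally x P.
Proof. intros H. exists (mkposreal 1 Rlt_0_1). intros; apply H. Qed.

Fixpoint Dl (f : R -> R) (d : R) (k : nat) : R -> R :=
  match k with
  | O => f
  | S k => fun y => Dl f d k y - Dl f d k (y + - d)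
  end.

Lemma Dl_smooth f d : smooth f -> forall k, smooth (Dl f d k).
Proof.
  intros Hf k; induction k as [|k IH]; simpl. exact Hf.
  intros n x. apply ex_derive_n_minus.
  - apply loc_all; intros; apply IH.
  - apply loc_all; intros; apply ex_derive_n_comp_trans, IH.
Qed.

Lemma Dl_Derive f d k j y : smooth f ->
  Derive_n (Dl f d (S k)) j y = Derive_n (Dl f d k) j y - Derive_n (Dl f d k) j (y + - d).
Proof.
  intros Hf. simpl. rewrite Derive_n_minus.
  - rewrite Derive_n_comp_trans. reflexivity.
  - apply loc_all; intros; apply Dl_smooth; auto.
  - apply loc_all; intros; apply ex_derive_n_comp_trans, Dl_smooth; auto.
Qed.

Lemma Dl_bound f d : smooth f -> 0 < d -> forall k j y U,
  (forall z, Rabs (Derive_n f (j + k) z) <= U) ->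
  Rabs (Derive_n (Dl f d k) j y) <= d ^ k * U.
Proof.
  intros Hf Hd k; induction k as [|k IH]; intros j y U HU.
  - simpl. rewrite Nat.add_0_r in HU. rewrite Rmult_1_l. apply HU.
  - rewrite Dl_Derive by auto.
    destruct (MVT_gen (Derive_n (Dl f d k) j) (y + - d) y (Derive_n (Dl f d k) (S j)))
      as [c [Hc Heq]].
    + intros x _. apply Derive_correct. apply (Dl_smooth f d Hf k (S j) x).
    + intros x _. apply continuity_pt_filterlim.
      apply (ex_derive_continuous (K := R_AbsRing) (V := R_NormedModule)).
      apply (Dl_smooth f d Hf k (S j) x).
    + rewrite Heq. replace (y - (y + - d)) with d by ring.
      rewrite Rabs_mult, (Rabs_right d) by lra.
      assert (H := IH (S j) c U).
      replace (S j + k)%nat with (j + S k)%nat in H by lia.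
      specialize (H HU). simpl.
      replace (d * d ^ k * U) with ((d ^ k * U) * d) by ring.
      apply Rmult_le_compat_r. lra. exact H.
Qed.

Lemma Dl_zero f d : 0 < d -> (forall y, y <= 0 \/ 1 <= y -> f y = 0) ->
  forall k y, y <= 0 \/ 1 + INR k * d <= y -> Dl f d k y = 0.
Proof.
  intros Hd Hf k; induction k as [|k IH]; intros y Hy; simpl.
  - apply Hf. simpl in Hy. lra.
  - rewrite S_INR in Hy. rewrite !IH. ring.
    + destruct Hy; [left|right]; lra.
    + destruct Hy; [left|right]; lra.
Qed.
Definition w (th : R) (m : nat) : C := expi (th * INR m).

Lemma w_S th m : w th (S m) = Cmult (w th m) (expi th).
Proof.
  unfold w, expi. rewrite S_INR. replace (th * (INR m + 1)) with (th * INR m + th) by ring.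
  rewrite cos_plus, sin_plus. unfold Cmult. simpl. f_equal; ring.
Qed.

Lemma w_0 th : w th 0 = RtoC 1.
Proof. unfold w, expi. simpl. rewrite Rmult_0_r, cos_0, sin_0. reflexivity. Qed.



Lemma Cmod_expi t : Cmod (expi t) = 1.
Proof.
  unfold expi, Cmod. simpl. replace (cos t * (cos t * 1) + sin t * (sin t * 1)) with (Rsqr (sin t) + Rsqr (cos t)) by (unfold Rsqr; ring).
  rewrite sin2_cos2. apply sqrt_1.
Qed.

Definition T (th d : R) (G : R -> R) (L : nat) : C :=
  sum_n (fun m => Cmult (w th m) (RtoC (G (INR m * d)))) L.

Lemma T_shift th d G L : G (- d) = 0 ->
  T th d (fun y => G y - G (y + - d)) L =
  Cplus (Cmult (Cminus (RtoC 1) (expi th)) (T th d G L))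
        (Cmult (w th (S L)) (RtoC (G (INR L * d)))).
Proof.
  intros H0. unfold T. induction L as [|L IH].
  - rewrite !sum_O. rewrite w_S, w_0. simpl INR.
    replace (0 * d + - d) with (- d) by ring. rewrite H0. rewrite Rmult_0_l.
    destruct (expi th) as [p q]. set (g := G 0).
    unfold Cmult, Cplus, Cminus, Cplus, Copp, RtoC; simpl. f_equal; ring.
  - rewrite !sum_Sn. change plus with Cplus. rewrite IH.
    rewrite (w_S th (S L)).
    replace (INR (S L) * d + - d) with (INR L * d) by (rewrite S_INR; ring).
    set (S1 := sum_n (fun m => Cmult (w th m) (RtoC (G (INR m * d)))) L). destruct S1 as [s1 s2].
    destruct (w th (S L)) as [w1 w2]. destruct (expi th) as [p q].
    set (a := G (INR L * d)). set (b := G (INR (S L) * d)).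
    unfold Cmult, Cplus, Cminus, Cplus, Copp, RtoC; simpl. f_equal; ring.
Qed.

Lemma Cplus_mult_0 x y : Cplus x (Cmult y (RtoC 0)) = x.
Proof. destruct x, y. unfold Cplus, Cmult, RtoC; simpl. f_equal; ring. Qed.

Lemma T_iter th d f L k : 0 < d -> (forall y, y <= 0 \/ 1 <= y -> f y = 0) ->
  1 + INR k * d <= INR L * d -> forall j, (j <= k)%nat ->
  Cmod (T th d (Dl f d j) L) = Cmod (Cminus (RtoC 1) (expi th)) ^ j * Cmod (T th d f L).
Proof.
  intros Hd Hf HL j; induction j as [|j IH]; intros Hj.
  - simpl. ring.
  - change (Dl f d (S j)) with (fun y => Dl f d j y - Dl f d j (y + - d)).
    rewrite T_shift.
    + rewrite (Dl_zero f d Hd Hf j (INR L * d)).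
      * rewrite Cplus_mult_0, Cmod_mult, IH by lia. simpl. ring.
      * right. assert (INR j <= INR k) by (apply le_INR; lia).
        assert (INR j * d <= INR k * d) by (apply Rmult_le_compat_r; lra). lra.
    + apply (Dl_zero f d Hd Hf). left; lra.
Qed.

Lemma T_bound th d G L B : (forall m, Rabs (G (INR m * d)) <= B) ->
  Cmod (T th d G L) <= INR (S L) * B.
Proof.
  intros HB. unfold T. induction L as [|L IH].
  - rewrite sum_O, Cmod_mult. unfold w. rewrite Cmod_expi, Cmod_R. specialize (HB 0%nat). simpl in *. lra.
  - rewrite sum_Sn. change plus with Cplus.
    eapply Rle_trans. apply Cmod_triangle.
    rewrite Cmod_mult. unfold w at 2. rewrite Cmod_expi, Cmod_R.
    rewrite (S_INR (S L)). specialize (HB (S L)). lra.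
Qed.
Lemma PI_gt3 : 3 < PI.
Proof. assert (H := PI2_3_2). lra. Qed.

Lemma sin_quarter v : 0 <= v <= PI / 2 -> v / 4 <= sin v.
Proof.
  intros Hv. assert (HP := PI_4). assert (HP3 := PI_gt3).
  assert (H : 0 <= v <= PI) by lra.
  destruct (SIN v (proj1 H) (proj2 H)) as [H1 _].
  replace (sin_lb v) with (v - v^3/6 + v^5/120 - v^7/5040) in H1
    by (unfold sin_lb, sin_approx, sin_term; simpl; field).
  assert (Hv2 : v * v <= 4) by nra.
  assert (Hv6 : v * v * (v * v) * (v * v) <= 64).
  { assert (0 <= v * v) by nra. assert (v*v*(v*v) <= 16) by nra. nra. }
  assert (0 <= v^5) by (apply pow_le; lra).
  assert (v^7 <= 64 * v) by (replace (v^7) with (v * v * (v * v) * (v * v) * v) by ring; nra).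
  assert (v^3 <= 4 * v) by (replace (v^3) with (v * v * v) by ring; nra).
  lra.
Qed.
Lemma sinPI_lb t : 0 <= t < 1 -> dist_circ t 0 / 2 <= sin (PI * t).
Proof.
  intros Ht. assert (HP3 := PI_gt3). assert (HP := PI_4).
  unfold dist_circ. rewrite Rminus_0_r, Rabs_right by lra.
  destruct (Rle_lt_dec t (1/2)) as [h|h].
  - assert (H := sin_quarter (PI * t)). 
    assert (PI * t <= PI / 2) by nra. assert (0 <= PI * t) by nra.
    assert (Rmin t (1 - t) <= t) by apply Rmin_l.
    assert (3 * t <= PI * t) by nra. specialize (H (conj H1 H0)). lra.
  - rewrite <- sin_PI_x. replace (PI - PI * t) with (PI * (1 - t)) by ring.
    assert (H := sin_quarter (PI * (1 - t))).
    assert (PI * (1 - t) <= PI / 2) by nra. assert (0 <= PI * (1 - t)) by nra.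
    assert (Rmin t (1 - t) <= 1 - t) by apply Rmin_r.
    assert (3 * (1 - t) <= PI * (1 - t)) by nra. specialize (H (conj H1 H0)). lra.
Qed.

Lemma Cmod_1_expi t : 0 <= t < 1 -> dist_circ t 0 <= Cmod (Cminus (RtoC 1) (expi (2 * PI * t))).
Proof.
  intros Ht. assert (H := sinPI_lb t Ht).
  unfold Cmod, expi, Cminus, Cplus, Copp, RtoC; simpl.
  replace (2 * PI * t) with (2 * (PI * t)) by ring.
  rewrite cos_2a_sin, sin_2a.
  set (s := sin (PI * t)) in *. set (c := cos (PI * t)).
  assert (Hsc : s * s + c * c = 1).
  { unfold s, c. rewrite <- (sin2_cos2 (PI * t)). unfold Rsqr. ring. }
  replace ((1 + - (1 - 2 * s * s)) * ((1 + - (1 - 2 * s * s)) * 1) +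
     (0 + - (2 * s * c)) * ((0 + - (2 * s * c)) * 1)) with ((2 * s) ^ 2).
  - rewrite sqrt_pow2. lra. assert (0 <= dist_circ t 0).
    { unfold dist_circ. rewrite Rminus_0_r, Rabs_right by lra. apply Rmin_glb; lra. }
    lra.
  - replace ((2 * s)^2) with (4 * s * s * (s * s + c * c)) by (rewrite Hsc; ring). ring.
Qed.
Lemma deriv_zero_out (chi : R -> R) eps : 0 < eps ->
  (forall x, (x <= eps \/ 1 - eps <= x) -> chi x = 0) ->
  forall k y, (y < eps \/ 1 - eps < y) -> Derive_n chi k y = 0.
Proof.
  intros He H k y Hy.
  assert (Hl : locally y (fun t => chi t = (fun _ : R => 0) t)).
  { destruct Hy as [Hy|Hy].
    - assert (Hp : 0 < eps - y) by lra.
      exists (mkposreal _ Hp). intros t Ht. apply H. left.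
      unfold ball in Ht; simpl in Ht; unfold AbsRing_ball, abs, minus, plus, opp in Ht; simpl in Ht.
      apply Rabs_lt_between in Ht. lra.
    - assert (Hp : 0 < y - (1 - eps)) by lra.
      exists (mkposreal _ Hp). intros t Ht. apply H. right.
      unfold ball in Ht; simpl in Ht; unfold AbsRing_ball, abs, minus, plus, opp in Ht; simpl in Ht.
      apply Rabs_lt_between in Ht. lra. }
  rewrite (Derive_n_ext_loc _ _ k y Hl).
  destruct k. reflexivity. apply Derive_n_const.
Qed.

Lemma deriv_bounded (chi : R -> R) : Cc_inf_01 chi ->
  forall k, exists U, forall y, Rabs (Derive_n chi k y) <= U.
Proof.
  intros [Hs [eps [He H]]] k.
  destruct (continuity_ab_maj (fun y => Rabs (Derive_n chi k y)) 0 1) as [M [HM HM1]].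
  - lra.
  - intros c _.
    apply (continuity_pt_comp (Derive_n chi k) Rabs).
    + apply continuity_pt_filterlim. apply (ex_derive_continuous (K := R_AbsRing) (V := R_NormedModule)).
      apply (Hs (S k) c).
    + apply Rcontinuity_abs.
  - exists (Rabs (Derive_n chi k M)). intros y.
    destruct (Rle_lt_dec 0 y) as [H0|H0].
    + destruct (Rle_lt_dec y 1) as [H1|H1].
      * apply HM; lra.
      * rewrite (deriv_zero_out chi eps He H k y) by lra. rewrite Rabs_R0. apply Rabs_pos.
    + rewrite (deriv_zero_out chi eps He H k y) by lra. rewrite Rabs_R0. apply Rabs_pos.
Qed.

Lemma sum_n_extend {G : AbelianMonoid} (f : nat -> G) n p :
  (forall m, (n < m)%nat -> f m = zero) -> sum_n f n = sum_n f (n + p).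
Proof.
  intros H. induction p as [|p IH]. now rewrite Nat.add_0_r.
  rewrite Nat.add_succ_r, sum_Sn, H by lia. rewrite plus_zero_r. exact IH.
Qed.

Lemma Cmult_0_RtoC x : Cmult x (RtoC 0) = RtoC 0.
Proof. destruct x. unfold Cmult, RtoC; simpl. f_equal; ring. Qed.

Lemma main_bound (chi : R -> R) (Hchi : Cc_inf_01 chi) N a r k U :
  (a < N)%nat -> 0 < r -> dist_circ (INR a / INR N) 0 >= r ->
  (forall y, Rabs (Derive_n chi k y) <= U) ->
  Cmod (exp_sum chi N a) <= INR N * (INR (k + 2) * U / (INR N * r) ^ k).
Proof.
  intros HaN Hr Hd HU.
  destruct Hchi as [Hs [eps [He Hz]]].
  assert (Hz' : forall y, y <= 0 \/ 1 <= y -> chi y = 0).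
  { intros y [h|h]; apply Hz; lra. }
  assert (HN : 0 < INR N) by (apply lt_0_INR; lia).
  assert (HN1 : 1 <= INR N) by (apply (le_INR 1); lia).
  set (d := / INR N).
  assert (Hd0 : 0 < d) by (apply Rinv_0_lt_compat; lra).
  set (t := INR a / INR N).
  set (th := 2 * PI * t).
  assert (Ht : 0 <= t < 1).
  { unfold t. split.
    - apply Rdiv_le_0_compat; [apply pos_INR | lra].
    - assert (INR a < INR N) by (apply lt_INR; lia).
      unfold Rdiv. apply (Rmult_lt_reg_r (INR N)); [lra|].
      rewrite Rmult_assoc, Rinv_l by lra. lra. }
  assert (HU0 : 0 <= U) by (eapply Rle_trans; [apply Rabs_pos | apply (HU 0)]).
  assert (E1 : exp_sum chi N a = T th d chi (N + k)).
  { unfold exp_sum, T.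
    rewrite (sum_n_ext _ (fun m => Cmult (w th m) (RtoC (chi (INR m * d))))).
    - replace (N + k)%nat with (N - 1 + S k)%nat by lia.
      apply sum_n_extend. intros m Hm.
      rewrite Hz'. apply Cmult_0_RtoC. right.
      assert (INR N <= INR m) by (apply le_INR; lia).
      unfold d. apply (Rmult_le_reg_r (INR N)); [lra|].
      rewrite Rmult_assoc, Rinv_l by lra. lra.
    - intros m. unfold w, th, t, d.
      replace (2 * PI * INR a * INR m / INR N) with (2 * PI * (INR a / INR N) * INR m) by (unfold Rdiv; ring).
      reflexivity. }
  assert (E2 := T_iter th d chi (N + k) k Hd0 Hz').
  assert (HL : 1 + INR k * d <= INR (N + k) * d).
  { rewrite plus_INR. unfold d. rewrite Rmult_plus_distr_r, Rinv_r by lra. lra. }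
  specialize (E2 HL k (Nat.le_refl k)).
  assert (E3 := T_bound th d (Dl chi d k) (N + k) (d ^ k * U)).
  assert (E3' : Cmod (T th d (Dl chi d k) (N + k)) <= INR (S (N + k)) * (d ^ k * U)).
  { apply E3. intros m. apply (Dl_bound chi d Hs Hd0 k 0 (INR m * d) U). exact HU. }
  clear E3. rewrite E2 in E3'. rewrite <- E1 in E3'.
  set (X := Cmod (exp_sum chi N a)) in *.
  set (q := Cmod (Cminus (RtoC 1) (expi th))) in *.
  assert (Hq : r <= q).
  { unfold q, th. assert (H := Cmod_1_expi t Ht). fold t in Hd. lra. }
  assert (HX : 0 <= X) by apply Cmod_ge_0.
  assert (E4 : (INR N * q) ^ k * X <= INR (S (N + k)) * U).
  { rewrite Rpow_mult_distr.
    replace (INR (S (N + k)) * U) with (INR N ^ k * (INR (S (N + k)) * (d ^ k * U))).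
    - rewrite Rmult_assoc. apply Rmult_le_compat_l. apply pow_le; lra. exact E3'.
    - assert (Hnd : INR N * d = 1) by (unfold d; field; lra).
      transitivity (INR (S (N + k)) * U * (INR N * d) ^ k).
      + rewrite Rpow_mult_distr; ring.
      + rewrite Hnd, pow1; ring. }
  assert (E5 : (INR N * r) ^ k * X <= (INR N * q) ^ k * X).
  { apply Rmult_le_compat_r; auto. apply pow_incr. nra. }
  assert (E6 : INR (S (N + k)) <= INR N * INR (k + 2)).
  { rewrite <- mult_INR. apply le_INR. nia. }
  assert (Hp : 0 < (INR N * r) ^ k) by (apply pow_lt; nra).
  unfold Rdiv. rewrite <- Rmult_assoc.
  apply (Rmult_le_reg_l ((INR N * r) ^ k)); auto.
  replace ((INR N * r) ^ k * (INR N * (INR (k + 2) * U) * / (INR N * r) ^ k))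
    with (INR N * INR (k + 2) * U) by (field; lra).
  assert (INR (S (N + k)) * U <= INR N * INR (k + 2) * U) by (apply Rmult_le_compat_r; auto).
  lra.
Qed.
Lemma Rpower_pos x y : 0 < Rpower x y.
Proof. unfold Rpower. apply exp_pos. Qed.

Lemma fact_le_pow k : (Factorial.fact k <= k ^ k)%nat.
Proof.
  induction k as [|k IH]. simpl; lia.
  change (Factorial.fact (S k)) with (S k * Factorial.fact k)%nat.
  rewrite Nat.pow_succ_r'. apply Nat.mul_le_mono_l.
  eapply Nat.le_trans. exact IH. apply Nat.pow_le_mono_l. lia.
Qed.

Lemma k2_le_pow k : (k + 2 <= 2 ^ (k + 1))%nat.
Proof.
  induction k as [|k IH]. simpl; lia.
  replace (S k + 1)%nat with (S (k + 1)) by lia. rewrite Nat.pow_succ_r'. lia.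
Qed.

Lemma gevrey_term C s x k : 0 < C -> 0 < s -> 0 < x ->
  INR k <= Rpower (x / (4 * C)) (1 / s) ->
  C ^ k * Rpower (INR (Factorial.fact k)) s <= (x / 4) ^ k.
Proof.
  intros HC Hs Hx Hk.
  destruct k as [|k'].
  - simpl. unfold Rpower. rewrite ln_1, Rmult_0_r, exp_0. lra.
  - set (k := S k') in *.
    assert (Hk0 : 0 < INR k) by (apply lt_0_INR; unfold k; lia).
    assert (H1 : Rpower (INR (Factorial.fact k)) s <= (Rpower (INR k) s) ^ k).
    { eapply Rle_trans.
      - apply (Rle_Rpower_l _ (INR k ^ k)). lra. split.
        + apply lt_0_INR. apply Factorial.lt_O_fact.
        + rewrite <- pow_INR. apply le_INR. apply fact_le_pow.
      - rewrite <- (Rpower_pow k (Rpower (INR k) s)) by (apply Rpower_pos).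
        rewrite <- (Rpower_pow k (INR k)) by lra.
        rewrite !Rpower_mult. rewrite Rmult_comm. lra. }
    assert (H2 : Rpower (INR k) s <= x / (4 * C)).
    { eapply Rle_trans. apply Rle_Rpower_l. lra. split. exact Hk0. exact Hk.
      rewrite Rpower_mult. replace (1 / s * s) with 1 by (field; lra).
      rewrite Rpower_1. lra. apply Rdiv_lt_0_compat; lra. }
    assert (H3 : (Rpower (INR k) s) ^ k <= (x / (4 * C)) ^ k).
    { apply pow_incr. split. left; apply Rpower_pos. exact H2. }
    replace ((x / 4) ^ k) with (C ^ k * (x / (4 * C)) ^ k).
    + apply Rmult_le_compat_l. apply pow_le; lra. lra.
    + rewrite <- Rpow_mult_distr. f_equal. field. lra.
Qed.

Lemma exp_mono a b : a <= b -> exp a <= exp b.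
Proof. intros [h|h]. left; apply exp_increasing; auto. subst; lra. Qed.

Lemma half_pow_bound k Y : Y < INR k + 1 -> (/ 2) ^ k <= 2 * exp (- (ln 2 * Y)).
Proof.
  intros HY.
  assert (Hl : 0 < ln 2) by (assert (H := ln_lt_2); lra).
  assert (E : (/ 2) ^ k = exp (- (INR k * ln 2))).
  { rewrite pow_inv. rewrite <- (Rpower_pow k 2) by lra. unfold Rpower.
    rewrite exp_Ropp. reflexivity. }
  rewrite E.
  replace (2 * exp (- (ln 2 * Y))) with (exp (ln 2 - ln 2 * Y)).
  - apply exp_mono. nra.
  - unfold Rminus. rewrite exp_plus, exp_ln by lra. reflexivity.
Qed.

Lemma glb_prop (E : R -> Prop) v0 : (forall v, E v -> 0 <= v) -> E v0 ->
  0 <= real (Glb_Rbar E) /\ (forall v, E v -> real (Glb_Rbar E) <= v) /\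
  (forall z, (forall v, E v -> z <= v) -> z <= real (Glb_Rbar E)).
Proof.
  intros H0 Hv0. destruct (Glb_Rbar_correct E) as [Hlb Hg].
  assert (A : Rbar_le 0 (Glb_Rbar E)) by (apply Hg; intros v Hv; apply H0, Hv).
  assert (B : Rbar_le (Glb_Rbar E) v0) by (apply Hlb, Hv0).
  destruct (Glb_Rbar E) as [l| |]; simpl in *; try contradiction.
  split; [exact A|split].
  - intros v Hv. apply (Hlb v Hv).
  - intros z Hz. apply (Hg (Finite z)). intros v Hv. apply Hz, Hv.
Qed.

Definition Eset (chi : R -> R) (x : R) (v : R) : Prop :=
  exists k U, (forall y, Rabs (Derive_n chi k y) <= U) /\ v = INR (k + 2) * U / x ^ k.

Lemma Eset_nonneg chi x : 0 < x -> forall v, Eset chi x v -> 0 <= v.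
Proof.
  intros Hx v [k [U [HU ->]]].
  assert (0 <= U) by (eapply Rle_trans; [apply Rabs_pos | apply (HU 0)]).
  apply Rdiv_le_0_compat. apply Rmult_le_pos; auto. apply pos_INR. apply pow_lt; auto.
Qed.

Lemma Eset_ne chi x : Cc_inf_01 chi -> exists v, Eset chi x v.
Proof.
  intros H. destruct (deriv_bounded chi H 0) as [U HU].
  exists (INR (0 + 2) * U / x ^ 0), 0%nat, U. split; auto.
Qed.

Theorem lemma1 (chi : R -> R) (Hchi : Cc_inf_01 chi) :
  exists g : R -> R,
    (forall x : R, 0 < x -> 0 <= g x) /\
    (forall (N a : nat) (r : R),
        (a < N)%nat -> 0 < r < 1 / 2 ->
        dist_circ (INR a / INR N) 0 >= r ->
        Cmod (exp_sum chi N a) <= INR N * g (INR N * r)) /\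
    (forall n : R, 0 <= n ->
        exists Cn : R, 0 < Cn /\ forall x : R, 0 < x -> g x <= Cn * Rpower x (- n)) /\
    (forall s : R, 1 < s -> gevrey_c_01 s chi ->
        exists C c : R, 0 < C /\ 0 < c /\
          forall x : R, 0 < x -> g x <= C * exp (- c * Rpower x (1 / s))).
Proof.
  exists (fun x => real (Glb_Rbar (Eset chi x))).
  assert (GP : forall x, 0 < x ->
    0 <= real (Glb_Rbar (Eset chi x)) /\ (forall v, Eset chi x v -> real (Glb_Rbar (Eset chi x)) <= v) /\
    (forall z, (forall v, Eset chi x v -> z <= v) -> z <= real (Glb_Rbar (Eset chi x)))).
  { intros x Hx. destruct (Eset_ne chi x Hchi) as [v0 Hv0].
    apply (glb_prop _ v0); auto. apply Eset_nonneg; auto. }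
  split. { intros x Hx. apply (proj1 (GP x Hx)). }
  split.
  - intros N a r HaN Hr Hd.
    assert (HN : 0 < INR N) by (apply lt_0_INR; lia).
    assert (Hx : 0 < INR N * r) by nra.
    destruct (GP _ Hx) as [_ [_ G3]].
    assert (Hz : Cmod (exp_sum chi N a) / INR N <= real (Glb_Rbar (Eset chi (INR N * r)))).
    { apply G3. intros v [k [U [HU ->]]].
      assert (H := main_bound chi Hchi N a r k U HaN (proj1 Hr) Hd HU).
      apply (Rmult_le_reg_l (INR N)); auto. unfold Rdiv at 1.
      replace (INR N * (Cmod (exp_sum chi N a) * / INR N)) with (Cmod (exp_sum chi N a)) by (field; lra).
      exact H. }
    apply (Rmult_le_compat_l (INR N)) in Hz; [|lra].
    replace (INR N * (Cmod (exp_sum chi N a) / INR N)) with (Cmod (exp_sum chi N a)) in Hz by (field; lra).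
    exact Hz.
  - split.
  { intros n Hn.
    set (k := Z.to_nat (up n)).
    assert (Hk : n <= INR k).
    { destruct (archimed n) as [h1 h2].
      assert (Hup : (0 < up n)%Z) by (apply lt_0_IZR; lra).
      unfold k. rewrite INR_IZR_INZ, Z2Nat.id by lia. lra. }
    destruct (deriv_bounded chi Hchi k) as [Uk HUk].
    destruct (deriv_bounded chi Hchi 0) as [U0 HU0].
    assert (Uk0 : 0 <= Uk) by (eapply Rle_trans; [apply Rabs_pos | apply (HUk 0)]).
    assert (U00 : 0 <= U0) by (eapply Rle_trans; [apply Rabs_pos | apply (HU0 0)]).
    assert (Hk2 : 0 <= INR (k + 2)) by apply pos_INR.
    exists (INR (k + 2) * Uk + 2 * U0 + 1). split. nra.
    intros x Hx. destruct (GP x Hx) as [G1 [G2 _]].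
    destruct (Rle_lt_dec 1 x) as [h|h].
    + eapply Rle_trans. apply G2. exists k, Uk. split; [exact HUk|reflexivity].
      unfold Rdiv. rewrite <- (Rpower_pow k x) by lra. rewrite <- Rpower_Ropp.
      assert (Rpower x (- INR k) <= Rpower x (- n)) by (apply Rle_Rpower; lra).
      assert (0 < Rpower x (- INR k)) by apply Rpower_pos.
      assert (0 < Rpower x (- n)) by apply Rpower_pos.
      assert (INR (k + 2) * Uk * Rpower x (- INR k) <= INR (k + 2) * Uk * Rpower x (- n)).
      { apply Rmult_le_compat_l; nra. }
      nra.
    + eapply Rle_trans. apply G2. exists 0%nat, U0. split; [exact HU0|reflexivity].
      assert (Hp : 1 <= Rpower x (- n)).
      { unfold Rpower. rewrite <- exp_0. apply exp_mono.
        assert (ln x < 0). { rewrite <- ln_1. apply ln_increasing; lra. }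
        nra. }
      replace (INR (0 + 2) * U0 / x ^ 0) with (2 * U0) by (simpl; field).
      assert ((INR (k + 2) * Uk + 2 * U0 + 1) * 1 <= (INR (k + 2) * Uk + 2 * U0 + 1) * Rpower x (- n))
        by (apply Rmult_le_compat_l; nra).
      nra.
  }
  { intros s Hs [_ Hgev].
    destruct Hchi as [Hsm [eps [He Hz]]].
    destruct (Hgev 0 1) as [C [HC HCb]].
    assert (Hb : forall k y, Rabs (Derive_n chi k y) <= C ^ (k + 1) * Rpower (INR (Factorial.fact k)) s).
    { intros k y.
      destruct (Rle_lt_dec 0 y) as [h0|h0]; [destruct (Rle_lt_dec y 1) as [h1|h1]|].
      - apply HCb. lra.
      - rewrite (deriv_zero_out chi eps He Hz k y) by lra. rewrite Rabs_R0.
        apply Rmult_le_pos. apply pow_le; lra. left; apply Rpower_pos.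
      - rewrite (deriv_zero_out chi eps He Hz k y) by lra. rewrite Rabs_R0.
        apply Rmult_le_pos. apply pow_le; lra. left; apply Rpower_pos. }
    assert (Hl : 0 < ln 2) by (assert (H := ln_lt_2); lra).
    exists (4 * C), (ln 2 * Rpower (/ (4 * C)) (1 / s)).
    split; [lra|split].
    { apply Rmult_lt_0_compat; auto. apply Rpower_pos. }
    intros x Hx. destruct (GP x Hx) as [G1 [G2 _]].
    set (Y := Rpower (x / (4 * C)) (1 / s)).
    assert (HY : 0 < Y) by apply Rpower_pos.
    assert (HcY : ln 2 * Rpower (/ (4 * C)) (1 / s) * Rpower x (1 / s) = ln 2 * Y).
    { unfold Y. rewrite Rmult_assoc. f_equal. rewrite Rmult_comm, Rpower_mult_distr. reflexivity.
      lra. apply Rinv_0_lt_compat; lra. }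
    destruct (archimed Y) as [h1 h2].
    assert (Hup : (0 < up Y)%Z) by (apply lt_0_IZR; lra).
    set (k := Z.to_nat (up Y - 1)).
    assert (HkY : INR k <= Y /\ Y < INR k + 1).
    { unfold k. rewrite INR_IZR_INZ, Z2Nat.id by lia. rewrite minus_IZR. simpl. lra. }
    eapply Rle_trans. apply G2. exists k, (C ^ (k + 1) * Rpower (INR (Factorial.fact k)) s).
    split; [apply Hb|reflexivity].
    rewrite Ropp_mult_distr_l_reverse, HcY.
    assert (T1 := gevrey_term C s x k HC ltac:(lra) Hx (proj1 HkY)).
    assert (T2 := half_pow_bound k Y (proj2 HkY)).
    assert (T3 : INR (k + 2) <= 2 * 2 ^ k).
    { replace (2 * 2 ^ k) with (INR (2 ^ (k + 1))).
      apply le_INR, k2_le_pow. rewrite pow_INR, pow_add. replace (INR 2) with 2 by (simpl; ring). ring. }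
    assert (Hxk : 0 < x ^ k) by (apply pow_lt; auto).
    assert (EqT : INR (k + 2) * (C ^ (k + 1) * Rpower (INR (Factorial.fact k)) s) / x ^ k
      = INR (k + 2) * C * (C ^ k * Rpower (INR (Factorial.fact k)) s) / x ^ k).
    { rewrite pow_add, pow_1. unfold Rdiv. ring. }
    rewrite EqT.
    assert (S1 : INR (k + 2) * C * (C ^ k * Rpower (INR (Factorial.fact k)) s) / x ^ k
                 <= INR (k + 2) * C * (/ 4) ^ k).
    { unfold Rdiv. rewrite Rmult_assoc. apply Rmult_le_compat_l.
      apply Rmult_le_pos. apply pos_INR. lra.
      replace ((/ 4) ^ k) with ((x / 4) ^ k * / x ^ k).
      apply Rmult_le_compat_r. left; apply Rinv_0_lt_compat; auto. exact T1.
      rewrite <- pow_inv, <- Rpow_mult_distr. f_equal. field. lra. }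
    assert (S2 : INR (k + 2) * (/ 4) ^ k <= 2 * (/ 2) ^ k).
    { replace ((/ 4) ^ k) with ((/ 2) ^ k * (/ 2) ^ k) by (rewrite <- Rpow_mult_distr; f_equal; field).
      assert (H22 : 2 ^ k * (/ 2) ^ k = 1) by (rewrite <- Rpow_mult_distr; rewrite Rinv_r, pow1; lra).
      assert (0 < (/ 2) ^ k) by (apply pow_lt; lra).
      nra. }
    assert (0 < (/ 4) ^ k) by (apply pow_lt; lra).
    assert (INR (k + 2) * C * (/ 4) ^ k <= 2 * (/ 2) ^ k * C).
    { replace (INR (k + 2) * C * (/ 4) ^ k) with (INR (k + 2) * (/ 4) ^ k * C) by ring.
      apply Rmult_le_compat_r; lra. }
    assert (2 * (/ 2) ^ k * C <= 2 * (2 * exp (- (ln 2 * Y))) * C).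
    { apply Rmult_le_compat_r. lra. lra. }
    lra. }
Qed.
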